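(* Let $S\subseteq\mathbb N$ be a numerical semigroup, let $X$ be its set of nonzero Apéry elements, $q$ its depth, and $G=G(S)$ its associated graph. Let $n=|V(G)|$, $k=\mathrm{vm}(G)$ and $\nu=\nu(G)$. Then $$\tau(X)\ \ge\ \frac{k(q-1)+\nu}{2}+(n-k).$$
   Context: A numerical semigroup is a subset $S\subseteq\mathbb N$ containing $0$, closed under addition, with finite complement. Let $S^*=S\setminus\{0\}$, $m=\min S^*$, $c=\max(\mathbb Z\setminus S)+1$ (conductor). The depth is $q=\lceil c/m\rceil$ and $\rho=qm-c\in[0,m)$. For $x\in S$, $\delta(x)$ is the unique integer with $x+\delta(x)m\in[c,c+m-1]$; for finite $A\subseteq S$, $\tau(A)=\sum_{x\in A}\delta(x)$. The Apéry set is $\{s\in S: s-m\notin S\}$ and $X$ is this set minus $\{0\}$. The graph $G(S)$ has edge set consisting of all subsets $\{x,y\}\subseteq X$ (with $x=y$ allowed, giving a loop) such that $x+y\in X$, and vertex set $V(G)$ the set of all endvertices of these edges. A matching is a set of pairwise disjoint edges (loops allowed); $\mathrm{vm}(G)$ is the maximum number of vertices touched by a matching, and a vertex-maximal matching is one touching $\mathrm{vm}(G)$ vertices. An edge $\{x,y\}$ is weak if $\delta(x)+\delta(y)=q-1$ and normal if $\delta(x)+\delta(y)\ge q$ (every edge satisfies $\delta(x)+\delta(y)\ge q-1$). The normality number $\nu(G)$ is the maximum, over all vertex-maximal matchings $M$, of the number of vertices touched by the normal edges of $M$. *)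

(* Defs.v *)
From mathcomp Require Import all_boot all_order all_algebra.
Set Implicit Arguments. Unset Strict Implicit. Unset Printing Implicit Defensive.
Import Order.TTheory GRing.Theory Num.Theory.

Definition numerical_semigroup (S : pred nat) : Prop :=
  [/\ S 0,
      (forall x y, S x -> S y -> S (x + y)) &
      exists N, forall n, N <= n -> S n].

Definition is_multiplicity (S : pred nat) (m : nat) : Prop :=
  [/\ S m, 0 < m & forall s, S s -> 0 < s -> m <= s].

(* c = max (Z \ S) + 1, i.e. the least integer c with [c, oo) contained in S
   (negative integers are never in S, so c is a natural number). *)
Definition is_conductor (S : pred nat) (c : nat) : Prop :=
  (forall n, c <= n -> S n) /\
  (forall c', (forall n, c' <= n -> S n) -> c <= c').

(* depth q = ceil (c / m) *)
Definition depth (m c : nat) : nat := (c + m - 1) %/ m.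

(* delta(x): the unique integer d with x + d m in [c, c+m-1], i.e.
   d = floor((c + m - 1 - x) / m). *)
Definition delta (m c x : nat) : int :=
  ((c%:Z + m%:Z - 1 - x%:Z) %/ m%:Z)%Z.

(* Apery set with respect to m: s in S with s - m not in S (integers). *)
Definition apery (S : pred nat) (m s : nat) : bool :=
  S s && ((s < m) || ~~ S (s - m)).

Section Graph.
Variables (S : pred nat) (m c : nat).

(* Every Apery element is <= c + m - 1, so we index by 'I_(c+m). *)
Local Notation T := 'I_(c + m).

Definition Xset : {set T} := [set x : T | apery S m x & val x != 0].

Definition inX (s : nat) : bool := apery S m s && (s != 0).

(* edges of G(S): {x, y} subset X (x = y allowed) with x + y in X *)
Definition is_edge (e : {set T}) : bool :=
  [exists x : T, exists y : T,
     [&& x \in Xset, y \in Xset, e == [set x; y] & inX (val x + val y)]].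

Definition Vset : {set T} := [set v : T | [exists e : {set T}, is_edge e && (v \in e)]].

Definition is_matching (M : {set {set T}}) : bool :=
  [forall e in M, is_edge e] &&
  [forall e in M, forall f in M, (e != f) ==> [disjoint e & f]].

Definition touched (M : {set {set T}}) : nat := #|cover M|.

Definition vm : nat := \max_(M : {set {set T}} | is_matching M) touched M.

Definition is_normal (e : {set T}) : bool :=
  [exists x : T, exists y : T,
     (e == [set x; y]) && ((depth m c)%:Z <= delta m c x + delta m c y)%R].

Definition normal_part (M : {set {set T}}) : {set {set T}} :=
  [set e in M | is_normal e].

Definition nu : nat :=
  \max_(M : {set {set T}} | is_matching M && (touched M == vm))
     touched (normal_part M).

Definition tau_X : int := (\sum_(x in Xset) delta m c x)%R.

End Graph.

(* Main.v *)
Require Import Defs.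
From mathcomp Require Import all_boot all_order all_algebra.
From mathcomp Require Import zify lra.
Import Order.TTheory GRing.Theory Num.Theory.
Local Open Scope ring_scope.

Lemma divf (a : int) (m : nat) : (0 < m)%N ->
  ((a %/ m)%Z * m%:Z <= a)%R /\ (a < ((a %/ m)%Z + 1) * m%:Z)%R.
Proof.
move=> m0. have mn0 : m%:Z != 0%R by rewrite eqz_nat -lt0n.
have e := divz_eq a m%:Z. have h1 := modz_ge0 a mn0. have h2 := @ltz_pmod a (m%:Z).
have h3 : (0 < m%:Z)%R by rewrite ltz_nat.
have {}h2 := h2 h3. lia.
Qed.

Lemma divfn (a m : nat) : (0 < m)%N -> (a %/ m * m <= a < (a %/ m).+1 * m)%N.
Proof. move=> m0. have e := divn_eq a m. have := ltn_pmod a m0. lia. Qed.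

Lemma delta_pair (m c x y : nat) : (0 < m)%N -> (x + y < c + m)%N ->
  ((depth m c)%:Z - 1 <= delta m c x + delta m c y)%R.
Proof.
move=> m0 h. rewrite /depth /delta.
have := @divfn (c+m-1) m m0. have := @divf (c%:Z + m%:Z - 1 - x%:Z) m m0.
have := @divf (c%:Z + m%:Z - 1 - y%:Z) m m0.
set d1 := (_ %/ _)%Z. set d2 := (_ %/ _)%Z. set q := (_ %/ _)%N. nia.
Qed.
Arguments delta_pair {m c x y}.

Lemma delta_ge0 (m c x : nat) : (0 < m)%N -> (x < c + m)%N -> (0 <= delta m c x)%R.
Proof.
move=> m0 h. rewrite /delta. have := @divf (c%:Z + m%:Z - 1 - x%:Z) m m0.
set d := (_ %/ _)%Z. nia.
Qed.
Arguments delta_ge0 {m c x}.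

Lemma delta_ge1 (m c x : nat) : (0 < m)%N -> (x < c)%N -> (1 <= delta m c x)%R.
Proof.
move=> m0 h. rewrite /delta. have := @divf (c%:Z + m%:Z - 1 - x%:Z) m m0.
set d := (_ %/ _)%Z. nia.
Qed.
Arguments delta_ge1 {m c x}.

Lemma apery_lt S m c s : is_conductor S c -> apery S m s -> (s < c + m)%N.
Proof.
case=> hc _ /andP[_ /orP[h|h]]; first lia.
case: (leqP c (s - m)) => h2; last lia.
by move: h; rewrite hc.
Qed.
Arguments apery_lt {S m c s}.

Lemma edgeP S m c (e : {set 'I_(c+m)}) : is_edge S e ->
  exists x y : 'I_(c+m), [/\ x \in Xset S m c, y \in Xset S m c, e = [set x; y]
     & inX S m (val x + val y)].
Proof. by move=> /existsP[x /existsP[y /and4P[hx hy /eqP he hxy]]]; exists x, y. Qed.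

Lemma Xset_ge S m c (x : 'I_(c+m)) : is_multiplicity S m -> x \in Xset S m c -> (m <= x)%N.
Proof.
case=> _ _ hm; rewrite inE => /andP[/andP[hS _] hx0]. apply: hm => //. by rewrite lt0n.
Qed.
Arguments Xset_ge {S m c x}.

Lemma edge_bound S m c (e : {set 'I_(c+m)}) :
  is_multiplicity S m -> is_conductor S c -> is_edge S e ->
  (((depth m c)%:Z - 1) * #|e|%:Z + (if is_normal e then #|e|%:Z else 0)
     <= 2 * \sum_(v in e) delta m c v)%R.
Proof.
move=> hm hc he. have m0 : (0 < m)%N by case: hm.
case: ifP => hn.
- move: hn => /existsP[x /existsP[y /andP[/eqP -> hq]]].
  case: (eqVneq x y) hq => [<-|nxy] hq.
    rewrite setUid cards1 big_set1. lia.
  rewrite cards2 nxy big_setU1 ?big_set1 /=; last by rewrite in_set1.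
  lia.
- have [x [y [hx hy Hex hxy]]] := @edgeP S m c e he.
  have hp := delta_pair m0 (apery_lt hc (andP hxy).1). simpl in hp.
  rewrite Hex. case: (eqVneq x y) => [exy|nxy].
    rewrite -exy setUid cards1 big_set1. rewrite -exy in hp. lia.
  rewrite cards2 nxy big_setU1 ?big_set1 /=; last by rewrite in_set1.
  lia.
Qed.

Theorem theorem3p24 (S : pred nat) (m c : nat) :
  numerical_semigroup S -> is_multiplicity S m -> is_conductor S c ->
  let q := depth m c in
  let n := #|Vset S m c| in
  let k := vm S m c in
  let nuG := nu S m c in
  (((k%:Z * (q%:Z - 1) + nuG%:Z)%:~R / 2%:R + (n%:Z - k%:Z)%:~R : rat)
     <= (tau_X S m c)%:~R)%R.
Proof.
move=> hS hm hc; cbv zeta. set q := depth m c. set n := #|Vset S m c|. set k := vm S m c. set nuG := nu S m c.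
have m0 : (0 < m)%N by case: hm.
have key : forall M : {set {set 'I_(c+m)}}, is_matching S M -> touched M = k ->
   (k%:Z * (q%:Z - 1) + (touched (normal_part M))%:Z + 2 * (n%:Z - k%:Z)
      <= 2 * tau_X S m c)%R.
  move=> M hM hk.
  have [hedge hdisj] : (forall e, e \in M -> is_edge S e) /\
      (forall e f, e \in M -> f \in M -> e != f -> [disjoint e & f]).
    move/andP: hM => [/forallP h1 /forallP h2]; split.
      by move=> e he; exact: (implyP (h1 e)) he.
    move=> e f he hf; move: (implyP (h2 e) he) => /forallP /(_ f) /implyP /(_ hf) /implyP.
    done.
  have triv : trivIset M by apply/trivIsetP => e f he hf; exact: hdisj.
  set C := cover M. set V := Vset S m c. set X := Xset S m c.
  have CV : C \subset V.
    apply/subsetP => v /bigcupP[e he hv]. rewrite inE. apply/existsP; exists e.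
    by rewrite hedge.
  have VX : V \subset X.
    apply/subsetP => v; rewrite inE => /existsP[e /andP[/(@edgeP S m c _)[x [y [hx hy -> _]]]]].
    by move=> /set2P[->|->].
  have V1 : forall v, v \in V -> (1 <= delta m c v)%R.
    move=> v; rewrite inE => /existsP[e /andP[/(@edgeP S m c _)[x [y [hx hy -> hxy]]] hv]].
    have lt := apery_lt hc (andP hxy).1.
    have mx := Xset_ge hm hx. have my := Xset_ge hm hy.
    apply: delta_ge1 => //.
    simpl in lt. by move: hv => /set2P[->|->]; lia.
  have X0 : forall v, v \in X -> (0 <= delta m c v)%R.
    move=> v; rewrite inE => /andP[ha _]; exact: (delta_ge0 m0 (apery_lt hc ha)).
  have s1 : (\sum_(x in V) delta m c x <= tau_X S m c)%R.
    rewrite /tau_X [in X in _ <= X](big_setID V) /= -/X (setIidPr VX) lerDl.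
    apply: sumr_ge0 => i /setDP[hi _]; exact: X0.
  have s2 : (\sum_(x in V) delta m c x =
      \sum_(x in C) delta m c x + \sum_(x in V :\: C) delta m c x)%R.
    by rewrite (big_setID C) /= (setIidPr CV).
  have s3 : ((#|V :\: C|)%:Z <= \sum_(x in V :\: C) delta m c x)%R.
    have -> : (#|V :\: C|)%:Z = \sum_(x in V :\: C) (1 : int)%R.
      by rewrite sumr_const natz.
    apply: ler_sum => i /setDP[hi _]; exact: V1.
  have cVC : #|V :\: C| = (#|V| - #|C|)%N by rewrite cardsD (setIidPr CV).
  have cle : (#|C| <= #|V|)%N by apply: subset_leq_card.
  have s4 : (\sum_(x in C) delta m c x = \sum_(e in M) \sum_(x in e) delta m c x)%R.
    exact: big_trivIset.
  have s5 : (\sum_(e in M) (((q%:Z - 1) * #|e|%:Z + (if is_normal e then #|e|%:Z else 0)))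
        <= \sum_(e in M) 2 * \sum_(x in e) delta m c x)%R.
    apply: ler_sum => e he. exact: edge_bound (hedge e he).
  rewrite -mulr_sumr -s4 big_split /= -mulr_sumr in s5.
  have e1 : (\sum_(e in M) #|e|%:Z)%R = k%:Z.
    rewrite -hk /touched -(eqP triv) -natz natr_sum.
    by apply: eq_bigr => e _; rewrite natz.
  set N := normal_part M.
  have NM : N \subset M by apply/subsetP => e; rewrite inE => /andP[].
  have trivN := trivIsetS NM triv.
  have e2 : (\sum_(e in M) (if is_normal e then #|e|%:Z else 0))%R = (touched N)%:Z.
    rewrite -big_mkcondr /= /touched -(eqP trivN) -natz natr_sum.
    apply: eq_big => [e|e _]; first by rewrite inE.
    by rewrite natz.
  rewrite e1 e2 in s5.
  have hn : n = #|V| by [].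
  have hkC : k = #|C| by rewrite -hk.
  move: s1 s2 s3 s5; rewrite cVC -hn -hkC.
  move: (\sum_(x in V) _)%R (\sum_(x in C) _)%R (\sum_(x in _ :\: _) _)%R => a b d.
  move: (touched N) (tau_X S m c) => t u. 
  nia.
have [M0 hM0 hk0] : exists2 M : {set {set 'I_(c+m)}}, is_matching S M & touched M = k.
  rewrite /k /vm.
  apply: (big_ind (fun t => exists2 M : {set {set 'I_(c+m)}}, is_matching S M & touched M = t)).
  - exists set0; last by rewrite /touched /cover big_set0 cards0.
    by apply/andP; split; apply/forallP => e; rewrite in_set0.
  - move=> a b [Ma ha1 ha2] [Mb hb1 hb2].
    case: (leqP a b) => h; [exists Mb => //; rewrite (maxn_idPr h) | exists Ma => //; rewrite (maxn_idPl (ltnW h))] => //.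
  - by move=> M hM; exists M.
have hnu : (k%:Z * (q%:Z - 1) + nuG%:Z + 2 * (n%:Z - k%:Z) <= 2 * tau_X S m c)%R.
  rewrite /nuG /nu.
  apply: (big_ind (fun t : nat =>
     (k%:Z * (q%:Z - 1) + t%:Z + 2 * (n%:Z - k%:Z) <= 2 * tau_X S m c)%R)).
  - have := key M0 hM0 hk0. move: (touched _) => t. lia.
  - by move=> a b ha hb /=; case: (leqP a b).
  - by move=> M /andP[hM /eqP hk]; exact: key.
move: hnu.
move: (k%:Z * (q%:Z - 1) + nuG%:Z)%R (n%:Z - k%:Z)%R (tau_X S m c) => A B t h.
have h' : ((A + 2 * B)%:~R <= (2 * t)%:~R :> rat)%R by rewrite ler_int.
rewrite rmorphD /= rmorphM /= rmorphM /= in h'.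
have two : ((2 : int)%:~R = 2%:R :> rat)%R by [].
rewrite two in h'. lra.
Qed.
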